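(* Let $\boldsymbol{W}=(w_{ir})\in\mathbb{R}^{n\times n}$ be nonnegative, primitive and doubly stochastic, with $\lambda:=\|\boldsymbol{W}-\mathbf{1}_n\mathbf{1}_n^\top/n\|_2<1$. For any realization of the iterates of GT-NSGDm (described in the context) with step size $\alpha>0$, and $\bar{\boldsymbol{x}}^t=\frac1n\sum_i\boldsymbol{x}_i^t$, we have for all $t=0,\dots,T$: $$\frac1n\sum_{i=1}^n\|\boldsymbol{x}_i^t-\bar{\boldsymbol{x}}^t\|\le\frac{\alpha\lambda}{1-\lambda}.$$
   Context: Algorithm GT-NSGDm (run in parallel at every node $i$, with local functions $f_i$ and stochastic gradients $\boldsymbol{g}_i(\boldsymbol{x},\boldsymbol{\xi})$): initialize $\boldsymbol{x}_i^{-1}=\boldsymbol{x}_i^0=\bar{\boldsymbol{x}}^0$ (a common point) and $\boldsymbol{v}_i^{-1}=\boldsymbol{y}_i^{-1}=\mathbf{0}_d$. For $t=0,\dots,T-1$: sample $\boldsymbol{\xi}_i^t$; set $\boldsymbol{v}_i^t=\beta\boldsymbol{v}_i^{t-1}+(1-\beta)\boldsymbol{g}_i(\boldsymbol{x}_i^t,\boldsymbol{\xi}_i^t)$; $\boldsymbol{y}_i^t=\sum_{r=1}^n w_{ir}(\boldsymbol{y}_r^{t-1}+\boldsymbol{v}_r^t-\boldsymbol{v}_r^{t-1})$; $\boldsymbol{x}_i^{t+1}=\sum_{r=1}^n w_{ir}\big(\boldsymbol{x}_r^t-\alpha\,\boldsymbol{y}_r^t/\|\boldsymbol{y}_r^t\|\big)$.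 *)

(* Defs.v *)
From HB Require Import structures.
From mathcomp Require Import all_boot all_order all_algebra.
From mathcomp Require Import boolp classical_sets reals.
Set Implicit Arguments. Unset Strict Implicit. Unset Printing Implicit Defensive.
Import Order.TTheory GRing.Theory Num.Theory.
Local Open Scope ring_scope.
Local Open Scope classical_set_scope.

Section Defs.
Variable R : realType.

Definition fnorm (m k : nat) (A : 'M[R]_(m, k)) : R :=
  Num.sqrt (\sum_(i < m) \sum_(j < k) A i j ^+ 2).

Definition specnorm (m k : nat) (A : 'M[R]_(m, k)) : R :=
  sup [set r : R | exists v : 'cV[R]_k, fnorm v <= 1 /\ r = fnorm (A *m v)].

Definition mxpow (n : nat) (W : 'M[R]_n) (k : nat) : 'M[R]_n :=
  iter k (mulmx W) 1%:M.

Definition nonneg_mx (n : nat) (W : 'M[R]_n) : Prop :=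
  forall i j, 0 <= W i j.

Definition doubly_stochastic (n : nat) (W : 'M[R]_n) : Prop :=
  nonneg_mx W /\
  (forall i, \sum_(j < n) W i j = 1) /\
  (forall j, \sum_(i < n) W i j = 1).

Definition primitive_mx (n : nat) (W : 'M[R]_n) : Prop :=
  exists k : nat, forall i j, 0 < mxpow W k i j.

Definition avg_mx (n : nat) : 'M[R]_n := n%:R^-1 *: const_mx 1.

End Defs.

(* Main.v *)
Require Import Defs.
From HB Require Import structures.
From mathcomp Require Import all_boot all_order all_algebra.
From mathcomp Require Import boolp classical_sets reals.
From mathcomp Require Import ring lra.
Import Order.TTheory GRing.Theory Num.Theory.
Local Open Scope ring_scope.
Section Helpers.
Variable R : realType.
Set Implicit Arguments. Unset Strict Implicit.

Lemma CS2 (I : finType) (a b : I -> R) :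
  (\sum_i a i * b i) ^+ 2 <= (\sum_i a i ^+ 2) * (\sum_i b i ^+ 2).
Proof.
set A := \sum_i a i ^+ 2; set B := \sum_i b i ^+ 2; set C := \sum_i a i * b i.
have B0 : 0 <= B by rewrite sumr_ge0 // => i _; exact: sqr_ge0.
have A0 : 0 <= A by rewrite sumr_ge0 // => i _; exact: sqr_ge0.
have key : 0 <= B * (A * B - C ^+ 2).
  have -> : B * (A * B - C ^+ 2) = \sum_i (B * a i - C * b i) ^+ 2.
    rewrite (eq_bigr (fun i => B^+2 * a i ^+ 2 - (2*B*C) * (a i * b i) + C^+2 * b i ^+ 2)); last by move=> i _; ring.
    rewrite big_split sumrB /= -!mulr_sumr -/A -/B -/C; ring.
  by rewrite sumr_ge0 // => i _; exact: sqr_ge0.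
have [Bz|Bp] := eqVneq B 0.
  have bz : forall i, b i = 0.
    move=> i; apply/eqP; rewrite -sqrf_eq0; apply/eqP.
    by apply: (psumr_eq0P (P := predT) (F := fun j => b j ^+ 2)) => // j _; exact: sqr_ge0.
  have -> : C = 0 by rewrite /C big1 // => i _; rewrite bz mulr0.
  by rewrite expr0n /= mulr_ge0.
have Bpos : 0 < B by rewrite lt_def Bp B0.
by move: key; rewrite pmulr_rge0 // subr_ge0.
Qed.

Lemma CSs (I : finType) (a b : I -> R) :
  \sum_i a i * b i <= Num.sqrt (\sum_i a i ^+ 2) * Num.sqrt (\sum_i b i ^+ 2).
Proof.
have A0 : 0 <= \sum_i a i ^+ 2 by rewrite sumr_ge0 // => i _; exact: sqr_ge0.
rewrite -sqrtrM //; apply: le_trans (ler_norm _) _.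
by rewrite -sqrtr_sqr ler_sqrt ?CS2 // mulr_ge0 // sumr_ge0 // => i _; exact: sqr_ge0.
Qed.

Lemma mink (I : finType) (a b : I -> R) :
  Num.sqrt (\sum_i (a i + b i) ^+ 2) <=
  Num.sqrt (\sum_i a i ^+ 2) + Num.sqrt (\sum_i b i ^+ 2).
Proof.
have A0 : 0 <= \sum_i a i ^+ 2 by rewrite sumr_ge0 // => i _; exact: sqr_ge0.
have B0 : 0 <= \sum_i b i ^+ 2 by rewrite sumr_ge0 // => i _; exact: sqr_ge0.
have S0 : 0 <= Num.sqrt (\sum_i a i ^+ 2) + Num.sqrt (\sum_i b i ^+ 2).
  by rewrite addr_ge0 // sqrtr_ge0.
rewrite -(ger0_norm S0) -sqrtr_sqr ler_sqrt ?sqr_ge0 //.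
rewrite (eq_bigr (fun i => a i ^+ 2 + 2 * (a i * b i) + b i ^+ 2)); last by move=> i _; ring.
rewrite !big_split /= -mulr_sumr.
have := CSs a b.
have h1 := sqr_sqrtr A0; have h2 := sqr_sqrtr B0.
set sA := Num.sqrt _; set sB := Num.sqrt _; set C := \sum_i _.
move=> HC.
rewrite sqrrD h1 h2. lra.
Qed.


Lemma sq_ge0s (I : finType) (a : I -> R) : 0 <= \sum_i a i ^+ 2.
Proof. by rewrite sumr_ge0 // => i _; exact: sqr_ge0. Qed.

Lemma fnorm_ge0 m k (A : 'M[R]_(m, k)) : 0 <= fnorm A.
Proof. exact: sqrtr_ge0. Qed.

Lemma fnorm_row d (v : 'rV[R]_d) : fnorm v = Num.sqrt (\sum_k v 0 k ^+ 2).
Proof. by rewrite /fnorm big_ord1. Qed.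

Lemma fnorm_row2 d (v : 'rV[R]_d) : fnorm v ^+ 2 = \sum_k v 0 k ^+ 2.
Proof. by rewrite fnorm_row sqr_sqrtr // sq_ge0s. Qed.

Lemma fnorm_col n (v : 'cV[R]_n) : fnorm v = Num.sqrt (\sum_k v k 0 ^+ 2).
Proof. by rewrite /fnorm; congr Num.sqrt; apply: eq_bigr => i _; rewrite big_ord1. Qed.

Lemma fnormZ m k (c : R) (A : 'M[R]_(m, k)) : fnorm (c *: A) = `|c| * fnorm A.
Proof.
rewrite /fnorm -sqrtr_sqr -sqrtrM ?sqr_ge0 //; congr Num.sqrt.
rewrite mulr_sumr; apply: eq_bigr => i _; rewrite mulr_sumr; apply: eq_bigr => j _.
by rewrite mxE exprMn.
Qed.

Lemma fnorm0 m k : fnorm (0 : 'M[R]_(m, k)) = 0.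
Proof. by rewrite -(scale0r (0 : 'M[R]_(m,k))) fnormZ normr0 mul0r. Qed.

Lemma fnorm_mul m k (A : 'M[R]_(m, k)) (c : 'cV[R]_k) :
  fnorm (A *m c) <= fnorm A * fnorm c.
Proof.
rewrite fnorm_col [fnorm A]/fnorm fnorm_col -sqrtrM; last first.
  by rewrite sumr_ge0 // => i _; exact: sq_ge0s.
rewrite ler_sqrt; last by rewrite mulr_ge0 // ?sq_ge0s // sumr_ge0 // => i _; exact: sq_ge0s.
rewrite mulr_suml; apply: ler_sum => i _; rewrite mxE.
exact: (CS2 (fun l => A i l) (fun l => c l 0)).
Qed.


Lemma spec_ub m n (A : 'M[R]_(m, n)) :
  ubound [set r : R | exists v : 'cV[R]_n, fnorm v <= 1 /\ r = fnorm (A *m v)]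
         (specnorm A).
Proof.
apply: ub_le_sup; exists (fnorm A) => r [v [hv ->]].
have h : fnorm (A *m v) <= fnorm A.
  apply: (le_trans (fnorm_mul A v)).
  by rewrite -[leRHS]mulr1 ler_wpM2l // fnorm_ge0.
exact: h.
Qed.

Lemma specnorm_ge0 m n (A : 'M[R]_(m, n)) : 0 <= specnorm A.
Proof.
apply: (@spec_ub _ _ A); exists 0; split; first by rewrite fnorm0.
by rewrite mulmx0 fnorm0.
Qed.

Lemma spec_bound m n (A : 'M[R]_(m, n)) (c : 'cV[R]_n) :
  fnorm (A *m c) <= specnorm A * fnorm c.
Proof.
have [f0|fp] := eqVneq (fnorm c) 0.
  have := fnorm_mul A c; rewrite f0 mulr0 => h.
  by rewrite mulr0; apply: le_trans h _.
have fpos : 0 < fnorm c by rewrite lt_def fp fnorm_ge0.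
have : fnorm (A *m ((fnorm c)^-1 *: c)) <= specnorm A.
  apply: (@spec_ub _ _ A); exists ((fnorm c)^-1 *: c); split => //.
  by rewrite fnormZ ger0_norm ?invr_ge0 ?fnorm_ge0 // mulVf.
rewrite -scalemxAr fnormZ ger0_norm ?invr_ge0 ?fnorm_ge0 //.
by rewrite mulrC -ler_pdivlMr ?invr_gt0 // invrK.
Qed.


Lemma sq_le (x y : R) : 0 <= x -> x <= y -> x ^+ 2 <= y ^+ 2.
Proof. move=> h0 h; nra. Qed.

Lemma key n d (A : 'M[R]_n) (w : 'I_n -> 'rV[R]_d) :
  \sum_i fnorm (\sum_r A i r *: w r) ^+ 2 <= specnorm A ^+ 2 * \sum_r fnorm (w r) ^+ 2.
Proof.
have ent i k : (\sum_r A i r *: w r) 0 k = \sum_r A i r * w r 0 k.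
  by rewrite summxE; apply: eq_bigr => r _; rewrite mxE.
pose c k : 'cV[R]_n := \col_r (w r 0 k).
have colE k : fnorm (A *m c k) ^+ 2 = \sum_i (\sum_r A i r * w r 0 k) ^+ 2.
  rewrite fnorm_col sqr_sqrtr ?sq_ge0s //; apply: eq_bigr => i _; rewrite mxE.
  by congr (_ ^+ 2); apply: eq_bigr => r _; rewrite mxE.
have colE2 k : fnorm (c k) ^+ 2 = \sum_r (w r 0 k) ^+ 2.
  by rewrite fnorm_col sqr_sqrtr ?sq_ge0s //; apply: eq_bigr => r _; rewrite mxE.
rewrite (eq_bigr (fun i => \sum_k (\sum_r A i r * w r 0 k) ^+ 2)); last first.
  by move=> i _; rewrite fnorm_row2; apply: eq_bigr => k _; rewrite ent.
rewrite exchange_big /=.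
rewrite (eq_bigr (fun r => \sum_k (w r 0 k) ^+ 2)); last by move=> r _; rewrite fnorm_row2.
rewrite [X in _ <= _ * X]exchange_big /= mulr_sumr; apply: ler_sum => k _.
rewrite -colE -colE2 -exprMn; apply: sq_le; first exact: fnorm_ge0.
exact: spec_bound.
Qed.

Lemma row_tri d (a b : 'rV[R]_d) : fnorm (a - b) <= fnorm a + fnorm b.
Proof.
rewrite !fnorm_row.
have -> : \sum_k (a - b) 0 k ^+ 2 = \sum_k (a 0 k + (- b 0 k)) ^+ 2.
  by apply: eq_bigr => k _; rewrite !mxE.
have -> : \sum_k b 0 k ^+ 2 = \sum_k (- b 0 k) ^+ 2.
  by apply: eq_bigr => k _; rewrite sqrrN.
exact: mink.
Qed.

End Helpers.

(* X t i = x_i^t ; V t i = v_i^{t-1} (V 0 = v^{-1} = 0) ; Y t i = y_i^{t-1} (Y 0 = y^{-1} = 0). *)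
Theorem lemma4 (R : realType) (n d T : nat) (W : 'M[R]_n)
  (alpha beta : R) (Xi : Type)
  (g : 'I_n -> 'rV[R]_d -> Xi -> 'rV[R]_d) (xi : nat -> 'I_n -> Xi)
  (x0 : 'rV[R]_d)
  (X V Y : nat -> 'I_n -> 'rV[R]_d) :
  doubly_stochastic W -> primitive_mx W ->
  specnorm (W - avg_mx R n) < 1 ->
  0 < alpha ->
  (forall i, X 0%N i = x0) ->
  (forall i, V 0%N i = 0) ->
  (forall i, Y 0%N i = 0) ->
  (forall t i, (t < T)%N ->
     V t.+1 i = beta *: V t i + (1 - beta) *: g i (X t i) (xi t i)) ->
  (forall t i, (t < T)%N ->
     Y t.+1 i = \sum_(r < n) W i r *: (Y t r + V t.+1 r - V t r)) ->
  (forall t i, (t < T)%N ->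
     X t.+1 i = \sum_(r < n) W i r *:
                  (X t r - (alpha / fnorm (Y t.+1 r)) *: Y t.+1 r)) ->
  forall t, (t <= T)%N ->
    n%:R^-1 * \sum_(i < n) fnorm (X t i - n%:R^-1 *: \sum_(r < n) X t r)
      <= alpha * specnorm (W - avg_mx R n) / (1 - specnorm (W - avg_mx R n)).
Proof.
move=> [Wnn [Wrow Wcol]] _ Hl alpha0 HX0 HV0 HY0 HV HY HX.
set lam := specnorm (W - avg_mx R n).
have lam0 : 0 <= lam := specnorm_ge0 _.
have lam1 : 0 < 1 - lam by rewrite subr_gt0.
have lam1' : 1 - lam != 0 by rewrite gt_eqF.
have RHS0 : 0 <= alpha * lam / (1 - lam).
  by rewrite divr_ge0 ?mulr_ge0 // ?ltW.
case: (posnP n) => [n0|npos].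
  move=> t _; rewrite big1 ?mulr0 //.
  by move=> i; have := ltn_ord i; rewrite {2}n0.
have nR : n%:R != 0 :> R by rewrite pnatr_eq0 -lt0n.
pose K := alpha * lam * Num.sqrt n%:R / (1 - lam).
have K0 : 0 <= K by rewrite divr_ge0 ?mulr_ge0 ?sqrtr_ge0 // ?ltW.
have DE i r : (W - avg_mx R n) i r = W i r - n%:R^-1 by rewrite !mxE mulr1.
have Dsum i : \sum_r (W - avg_mx R n) i r = 0.
  rewrite (eq_bigr _ (fun r _ => DE i r)) sumrB Wrow sumr_const card_ord.
  by rewrite -[n%:R^-1 *+ n]mulr_natr (mulVf nR) subrr.
have claim : forall t, (t <= T)%N ->
  Num.sqrt (\sum_i fnorm (X t i - n%:R^-1 *: \sum_r X t r) ^+ 2) <= K.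
  elim=> [|t IH] Ht.
    have -> : \sum_i fnorm (X 0%N i - n%:R^-1 *: \sum_r X 0%N r) ^+ 2 = 0.
      rewrite big1 // => i _.
      rewrite HX0 (eq_bigr (fun _ => x0)); last by move=> r _; rewrite HX0.
      rewrite sumr_const card_ord -scaler_nat scalerA mulVf // scale1r subrr fnorm0.
      by rewrite expr2 mul0r.
    by rewrite sqrtr0.
  have IH' := IH (ltnW Ht).
  pose u r := (alpha / fnorm (Y t.+1 r)) *: Y t.+1 r.
  pose m := n%:R^-1 *: \sum_r X t r.
  have eqE i : X t.+1 i - n%:R^-1 *: \sum_r X t.+1 r
             = \sum_r (W - avg_mx R n) i r *: ((X t r - m) - u r).
    have Ssum : \sum_r X t.+1 r = \sum_r (X t r - u r).
      rewrite (eq_bigr _ (fun r _ => HX t r Ht)) exchange_big /=.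
      by apply: eq_bigr => r _; rewrite -scaler_suml Wcol scale1r.
    rewrite Ssum HX //.
    have -> : \sum_r (W - avg_mx R n) i r *: (X t r - m - u r)
        = \sum_r (W - avg_mx R n) i r *: (X t r - u r) - (\sum_r (W - avg_mx R n) i r) *: m.
      rewrite scaler_suml -sumrB; apply: eq_bigr => r _; rewrite -scalerBr.
      by rewrite addrAC.
    rewrite Dsum scale0r subr0 scaler_sumr -sumrB; apply: eq_bigr => r _.
    by rewrite DE scalerBl.
  have Fe : Num.sqrt (\sum_i fnorm (X t.+1 i - n%:R^-1 *: \sum_r X t.+1 r) ^+ 2)
      <= lam * Num.sqrt (\sum_r fnorm ((X t r - m) - u r) ^+ 2).
    rewrite (eq_bigr _ (fun i _ => congr1 (fun v => fnorm v ^+ 2) (eqE i))).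
    rewrite -(ger0_norm lam0) -sqrtr_sqr -sqrtrM ?sqr_ge0 // ler_sqrt.
      exact: key.
    by rewrite mulr_ge0 ?sqr_ge0 // sq_ge0s.
  have fu r : fnorm (u r) <= alpha.
    rewrite /u fnormZ.
    have [f0|fp] := eqVneq (fnorm (Y t.+1 r)) 0.
      by rewrite f0 mulr0 ltW.
    rewrite normrM (ger0_norm (ltW alpha0)) ger0_norm ?invr_ge0 ?fnorm_ge0 //.
    by rewrite -mulrA mulVf // mulr1.
  have Fw : Num.sqrt (\sum_r fnorm ((X t r - m) - u r) ^+ 2)
      <= Num.sqrt (\sum_i fnorm (X t i - n%:R^-1 *: \sum_r X t r) ^+ 2)
         + alpha * Num.sqrt n%:R.
    apply: (le_trans (y := Num.sqrt (\sum_r (fnorm (X t r - m) + fnorm (u r)) ^+ 2))).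
      rewrite ler_sqrt ?sq_ge0s //; apply: ler_sum => r _; apply: sq_le.
        exact: fnorm_ge0.
      exact: row_tri.
    apply: le_trans (mink _ _) _; apply: lerD; first exact: lexx.
    rewrite -(ger0_norm (ltW alpha0)) -sqrtr_sqr -sqrtrM ?sqr_ge0 // ler_sqrt; last first.
      by rewrite mulr_ge0 ?sqr_ge0.
    apply: (le_trans (y := \sum_(r < n) alpha ^+ 2)).
      by apply: ler_sum => r _; apply: sq_le; [exact: fnorm_ge0 | exact: fu].
    by rewrite sumr_const card_ord mulr_natr.
  have KE : lam * (K + alpha * Num.sqrt n%:R) = K by rewrite /K; field.
  apply: (le_trans Fe); rewrite -KE; apply: ler_wpM2l => //.
  apply: (le_trans Fw); apply: lerD => //; exact: lexx.
move=> t Ht; have F := claim t Ht.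
have CS : \sum_i fnorm (X t i - n%:R^-1 *: \sum_r X t r)
    <= Num.sqrt (\sum_i fnorm (X t i - n%:R^-1 *: \sum_r X t r) ^+ 2) * Num.sqrt n%:R.
  have := CSs (fun i => fnorm (X t i - n%:R^-1 *: \sum_r X t r)) (fun _ : 'I_n => 1).
  rewrite /= (eq_bigr (fun _ => 1) (fun i _ => expr1n _ 2)) sumr_const card_ord.
  by under eq_bigr do rewrite mulr1.

have sn : Num.sqrt n%:R ^+ 2 = n%:R :> R by rewrite sqr_sqrtr ?ler0n.
have KS : K * Num.sqrt n%:R = alpha * lam * Num.sqrt n%:R ^+ 2 / (1 - lam).
  by rewrite /K; field.
have fin : n%:R^-1 * (K * Num.sqrt n%:R) = alpha * lam / (1 - lam).
  by rewrite KS sn; field; rewrite lam1' nR.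
rewrite -fin; apply: ler_wpM2l; first by rewrite invr_ge0 ler0n.
apply: (le_trans CS); apply: ler_wpM2r; first exact: sqrtr_ge0.
exact: F.
Qed.
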